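(* Let $\alpha_a$ be a labeled dGL hybrid game and $\varphi$ a formula. The model predictive Angelic subvalue map $M$ for $\alpha_a$ and Angel winning condition $\varphi$ is an inductive Angelic subvalue map for $\alpha_a$ compatible with $\varphi$ (i.e. $\models M(\mathsf{end})\rightarrow\varphi$). Dually, the model predictive Demonic subvalue map $M'$ for $\alpha_a$ and Demon winning condition $\varphi$ is an inductive Demonic subvalue map for $\alpha_a$.
   Context: Differential game logic (dGL). Hybrid games are generated by $\alpha,\beta ::= x:=e \mid \alpha;\beta \mid ?Q \mid \{x'=f(x)\,\&\,Q\} \mid \alpha^{*} \mid \alpha\cup\beta \mid x:=* \mid\ !Q \mid \{x'=f(x)\,\&\,Q\}^{d} \mid \alpha^{\times} \mid \alpha\cap\beta \mid x:=\otimes$, with $x$ a real variable (vector for ODEs), $e,f(x)$ polynomial terms, $Q$ a formula. Players Angel and Demon: $x:=e$ deterministic assignment; in $x:=*$ Angel (in $x:=\otimes$ Demon) assigns any real; in $\{x'=f(x)\&Q\}$ Angel (in $\{\cdot\}^d$ Demon) chooses a duration $r\ge 0$ of following the ODE with $Q$ true throughout; $?Q$ makes Angel lose and $!Q$ makes Demon lose if $Q$ is false; in $\alpha\cup\beta$ Angel (in $\alpha\cap\beta$ Demon) chooses the branch; in $\alpha^*$ Angel (in $\alpha^\times$ Demon) decides before each iteration whether to repeat or stop; $\alpha;\beta$ sequential. Formulas: polynomial (in)equalities closed under connectives, real quantifiers, and modalities $\langle\alpha\rangle\varphi$ (Angel can win $\alpha$ reaching $\varphi$) and $[\alpha]\varphi\equiv\neg\langle\alpha\rangle\neg\varphi$,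 with the standard dGL winning-region semantics ($\langle x:=*\rangle\varphi\leftrightarrow\exists x\varphi$, $\langle x:=\otimes\rangle\varphi\leftrightarrow\forall x\varphi$, $\langle ?Q\rangle\varphi\leftrightarrow Q\wedge\varphi$, $\langle !Q\rangle\varphi\leftrightarrow(Q\rightarrow\varphi)$, $\cup$ as disjunction, $\cap$ as conjunction, $\langle\alpha;\beta\rangle\varphi\leftrightarrow\langle\alpha\rangle\langle\beta\rangle\varphi$, Angel ODE existential, Demon ODE universal, $\langle\alpha^*\rangle$ least and $\langle\alpha^\times\rangle$ greatest fixed point). $\models$ denotes validity. Labels: every node of the syntax tree carries a unique label; $\alpha_a$ has root label $a$; $\mathrm{nodes}(\alpha_a)$ is its set of subgame labels; $\mathsf{end}$ is a special extra label. A map $S$ assigns formulas to a label set containing $\mathrm{nodes}(\alpha_a)\cup\{\mathsf{end}\}$; $S\{\mathsf{end}\mapsto Q\}$ replaces the value at $\mathsf{end}$. $\gamma_g,\delta_d$ denote immediate subgames with root labels $g,d$. Game suffix: $\mathrm{suffix}_a(\alpha_a)=\alpha_a$; for $b\ne a$: for loops $((\gamma_g)^* )_a,((\gamma_g)^\times)_a$ it is $\mathrm{suffix}_b(\gamma_g);\alpha_a$; for $\cup,\cap$ the suffix within the branch containing $b$; for $(\gamma_g;\delta_d)_a$ it is $\mathrm{suffix}_b(\gamma_g);\delta_d$ if $b\in\mathrm{nodes}(\gamma_g)$ else $\mathrm{suffix}_b(\delta_d)$. Model predictive Angelic subvalue map: $M(\mathsf{end})=\varphi$, $M(b)=\langle\mathrm{suffix}_b(\alpha_a)\rangle\varphi$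 for $b\in\mathrm{nodes}(\alpha_a)$; model predictive Demonic: $M'(\mathsf{end})=\varphi$, $M'(b)=[\mathrm{suffix}_b(\alpha_a)]\varphi$. Angelic existential projection $\mathcal{P}(\alpha_a,S)$: $(x:=* )_a\mapsto(x:=* )_a;?S(\mathsf{end})$; Angel ODE $\mapsto$ ODE$;?S(\mathsf{end})$; $(\gamma_g\cup\delta_d)_a\mapsto(?S(g);\mathcal{P}(\gamma_g,S))\cup(?S(d);\mathcal{P}(\delta_d,S))$; $((\gamma_g)^* )_a\mapsto(?S(g);\mathcal{P}(\gamma_g,S\{\mathsf{end}\mapsto S(a)\}))^*;?S(\mathsf{end})$; $(\gamma_g;\delta_d)_a\mapsto\mathcal{P}(\gamma_g,S\{\mathsf{end}\mapsto S(d)\});\mathcal{P}(\delta_d,S)$; $\cap\mapsto\mathcal{P}(\gamma_g,S)\cap\mathcal{P}(\delta_d,S)$; $((\gamma_g)^\times)_a\mapsto\mathcal{P}(\gamma_g,S\{\mathsf{end}\mapsto S(a)\})^\times$; other atomic games unchanged (labels preserved, new nodes fresh labels). Demonic existential projection $\mathcal{D}(\alpha_a,S)$: $(x:=\otimes)_a\mapsto(x:=\otimes)_a;!S(\mathsf{end})$; Demon ODE $\mapsto$ ODE$^d;!S(\mathsf{end})$; $(\gamma_g\cap\delta_d)_a\mapsto(!S(g);\mathcal{D}(\gamma_g,S))\cap(!S(d);\mathcal{D}(\delta_d,S))$; $((\gamma_g)^\times)_a\mapsto(!S(g);\mathcal{D}(\gamma_g,S\{\mathsf{end}\mapsto S(g)\vee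 S(\mathsf{end})\}))^\times;!S(\mathsf{end})$; $(\gamma_g;\delta_d)_a\mapsto\mathcal{D}(\gamma_g,S\{\mathsf{end}\mapsto S(d)\});\mathcal{D}(\delta_d,S)$; $\cup\mapsto\mathcal{D}(\gamma_g,S)\cup\mathcal{D}(\delta_d,S)$; $((\gamma_g)^* )_a\mapsto\mathcal{D}(\gamma_g,S\{\mathsf{end}\mapsto S(a)\})^*$; other atomic games unchanged. Inductive Angelic subvalue map ($S\Vdash\alpha_a$), recursively: atomic $\alpha$ (all assignments, tests, ODEs): $\models S(a)\rightarrow\langle\alpha\rangle S(\mathsf{end})$; $\cup$: $\models S(a)\rightarrow S(g)\vee S(d)$, $S\Vdash\gamma_g$, $S\Vdash\delta_d$; $\cap$: $\models S(a)\rightarrow S(g)\wedge S(d)$ and both; $;$: $\models S(a)\rightarrow S(g)$, $S\{\mathsf{end}\mapsto S(d)\}\Vdash\gamma_g$, $S\Vdash\delta_d$; $((\gamma_g)^* )_a$: $\models S(a)\rightarrow\langle\mathcal{P}(\alpha_a,S)\rangle S(\mathsf{end})$ and $S\{\mathsf{end}\mapsto S(a)\}\Vdash\gamma_g$; $((\gamma_g)^\times)_a$: $\models S(a)\rightarrow S(g)\wedge S(\mathsf{end})$ and $S\{\mathsf{end}\mapsto S(a)\}\Vdash\gamma_g$. Inductive Demonic subvalue map, recursively: atomic: $\models S(a)\rightarrow[\alpha]S(\mathsf{end})$; $\cup$: $\models S(a)\rightarrow S(g)\wedge S(d)$ and both; $\cap$: $\models S(a)\rightarrow S(g)\vee S(d)$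 and both; $;$: $\models S(a)\rightarrow S(g)$, $S\{\mathsf{end}\mapsto S(d)\}$ for $\gamma_g$, $S$ for $\delta_d$; $((\gamma_g)^* )_a$: $\models S(a)\rightarrow S(\mathsf{end})\wedge S(g)$ and $S\{\mathsf{end}\mapsto S(a)\}$ for $\gamma_g$; $((\gamma_g)^\times)_a$: $\models S(a)\rightarrow[\mathcal{D}(\alpha_a,S)]S(\mathsf{end})$ and $S\{\mathsf{end}\mapsto S(a)\}$ for $\gamma_g$. *)

(* Defs.v *)
From Stdlib Require Import Reals QArith List Arith.
Open Scope R_scope.

Definition var := nat.
Definition state := var -> R.

Inductive term : Type :=
| TVar (x : var)
| TConst (q : Q)
| TPlus (e1 e2 : term)
| TTimes (e1 e2 : term)
| TNeg (e : term).

(* An ODE  x1'=f1(x), ..., xn'=fn(x)  is a list of (variable, right-hand side) *)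
Definition ode := list (var * term).

Definition label := nat.

Inductive fml : Type :=
| FTrue | FFalse
| FLe (e1 e2 : term) | FLt (e1 e2 : term) | FEq (e1 e2 : term)
| FNot (p : fml) | FAnd (p q : fml) | FOr (p q : fml) | FImp (p q : fml)
| FForall (x : var) (p : fml) | FExists (x : var) (p : fml)
| FDia (a : game) (p : fml)
with game : Type :=
| GAsgn   (l : label) (x : var) (e : term)
| GSeq    (l : label) (a b : game)
| GTest   (l : label) (Q : fml)
| GOde    (l : label) (o : ode) (Q : fml)
| GLoop   (l : label) (a : game)
| GChoice (l : label) (a b : game)
| GRand   (l : label) (x : var)
| GDTest  (l : label) (Q : fml)
| GDOde   (l : label) (o : ode) (Q : fml)
| GDLoop  (l : label) (a : game)
| GDChoice (l : label) (a b : game)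
| GDRand  (l : label) (x : var).

Definition FBox (a : game) (p : fml) : fml := FNot (FDia a (FNot p)).

Fixpoint teval (s : state) (e : term) : R :=
  match e with
  | TVar x => s x
  | TConst q => Q2R q
  | TPlus e1 e2 => teval s e1 + teval s e2
  | TTimes e1 e2 => teval s e1 * teval s e2
  | TNeg e => - teval s e
  end.

Definition upd (s : state) (x : var) (v : R) : state :=
  fun y => if Nat.eqb y x then v else s y.

Definition ode_sol (o : ode) (Q : state -> Prop) (s : state) (r : R)
    (y : R -> state) : Prop :=
  0 <= r /\
  (forall v, y 0 v = s v) /\
  (forall t, 0 <= t <= r -> Q (y t)) /\
  (forall v, ~ In v (map fst o) -> forall t, 0 <= t <= r -> y t v = s v) /\
  (forall x e, In (x, e) o -> forall t, 0 <= t <= r ->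
       derivable_pt_lim (fun tau => y tau x) t (teval (y t) e)).

Fixpoint fsem (p : fml) (s : state) {struct p} : Prop :=
  match p with
  | FTrue => True
  | FFalse => False
  | FLe e1 e2 => teval s e1 <= teval s e2
  | FLt e1 e2 => teval s e1 < teval s e2
  | FEq e1 e2 => teval s e1 = teval s e2
  | FNot p => ~ fsem p s
  | FAnd p q => fsem p s /\ fsem q s
  | FOr p q => fsem p s \/ fsem q s
  | FImp p q => fsem p s -> fsem q s
  | FForall x p => forall v, fsem p (upd s x v)
  | FExists x p => exists v, fsem p (upd s x v)
  | FDia a p => gsem a (fsem p) s
  end
(* gsem a X = winning region of Angel in game a for goal region X *)
with gsem (a : game) (X : state -> Prop) (s : state) {struct a} : Prop :=
  match a with
  | GAsgn _ x e => X (upd s x (teval s e))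
  | GSeq _ a b => gsem a (gsem b X) s
  | GTest _ Q => fsem Q s /\ X s
  | GOde _ o Q => exists r y, ode_sol o (fsem Q) s r y /\ X (y r)
  | GLoop _ a =>            (* least fixed point of Z |-> X ∪ gsem a Z *)
      forall Z : state -> Prop,
        (forall t, X t \/ gsem a Z t -> Z t) -> Z s
  | GChoice _ a b => gsem a X s \/ gsem b X s
  | GRand _ x => exists v, X (upd s x v)
  | GDTest _ Q => fsem Q s -> X s
  | GDOde _ o Q => forall r y, ode_sol o (fsem Q) s r y -> X (y r)
  | GDLoop _ a =>           (* greatest fixed point of Z |-> X ∩ gsem a Z *)
      exists Z : state -> Prop,
        (forall t, Z t -> X t /\ gsem a Z t) /\ Z s
  | GDChoice _ a b => gsem a X s /\ gsem b X s
  | GDRand _ x => forall v, X (upd s x v)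
  end.

Definition valid (p : fml) : Prop := forall s, fsem p s.

Definition lbl (a : game) : label :=
  match a with
  | GAsgn l _ _ | GSeq l _ _ | GTest l _ | GOde l _ _ | GLoop l _
  | GChoice l _ _ | GRand l _ | GDTest l _ | GDOde l _ _ | GDLoop l _
  | GDChoice l _ _ | GDRand l _ => l
  end.

Fixpoint nodes (a : game) : list label :=
  match a with
  | GSeq l a b | GChoice l a b | GDChoice l a b => l :: nodes a ++ nodes b
  | GLoop l a | GDLoop l a => l :: nodes a
  | _ => lbl a :: nil
  end.

Definition well_labeled (a : game) : Prop := NoDup (nodes a).

Definition in_nodes (b : label) (a : game) : bool := existsb (Nat.eqb b) (nodes a).

Inductive lab : Type := LNode (n : label) | LEnd.

Definition smap := lab -> fml.

Definition L (a : game) : lab := LNode (lbl a).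

Definition upd_end (S : smap) (Q : fml) : smap :=
  fun b => match b with LEnd => Q | LNode n => S (LNode n) end.

(* Label given to nodes newly created by suffix / projection constructions.
   The semantics of games does not depend on labels, so the choice is immaterial. *)
Definition new_lab : label := 0%nat.

Fixpoint suffix (b : label) (a : game) : game :=
  if Nat.eqb b (lbl a) then a else
  match a with
  | GLoop _ g | GDLoop _ g => GSeq new_lab (suffix b g) a
  | GChoice _ g d | GDChoice _ g d =>
      if in_nodes b g then suffix b g else suffix b d
  | GSeq _ g d =>
      if in_nodes b g then GSeq new_lab (suffix b g) d else suffix b d
  | _ => a
  end.

Fixpoint projA (S : smap) (a : game) : game :=
  match a with
  | GRand l x => GSeq new_lab (GRand l x) (GTest new_lab (S LEnd))
  | GOde l o Q => GSeq new_lab (GOde l o Q) (GTest new_lab (S LEnd))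
  | GChoice l g d =>
      GChoice l (GSeq new_lab (GTest new_lab (S (L g))) (projA S g))
                (GSeq new_lab (GTest new_lab (S (L d))) (projA S d))
  | GLoop l g =>
      GSeq new_lab
        (GLoop l (GSeq new_lab (GTest new_lab (S (L g)))
                               (projA (upd_end S (S (LNode l))) g)))
        (GTest new_lab (S LEnd))
  | GSeq l g d => GSeq l (projA (upd_end S (S (L d))) g) (projA S d)
  | GDChoice l g d => GDChoice l (projA S g) (projA S d)
  | GDLoop l g => GDLoop l (projA (upd_end S (S (LNode l))) g)
  | _ => a
  end.

Fixpoint projD (S : smap) (a : game) : game :=
  match a with
  | GDRand l x => GSeq new_lab (GDRand l x) (GDTest new_lab (S LEnd))
  | GDOde l o Q => GSeq new_lab (GDOde l o Q) (GDTest new_lab (S LEnd))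
  | GDChoice l g d =>
      GDChoice l (GSeq new_lab (GDTest new_lab (S (L g))) (projD S g))
                 (GSeq new_lab (GDTest new_lab (S (L d))) (projD S d))
  | GDLoop l g =>
      GSeq new_lab
        (GDLoop l (GSeq new_lab (GDTest new_lab (S (L g)))
                    (projD (upd_end S (FOr (S (L g)) (S LEnd))) g)))
        (GDTest new_lab (S LEnd))
  | GSeq l g d => GSeq l (projD (upd_end S (S (L d))) g) (projD S d)
  | GChoice l g d => GChoice l (projD S g) (projD S d)
  | GLoop l g => GLoop l (projD (upd_end S (S (LNode l))) g)
  | _ => a
  end.

Fixpoint AngSub (S : smap) (a : game) : Prop :=
  match a with
  | GChoice l g d =>
      valid (FImp (S (LNode l)) (FOr (S (L g)) (S (L d)))) /\
      AngSub S g /\ AngSub S d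
  | GDChoice l g d =>
      valid (FImp (S (LNode l)) (FAnd (S (L g)) (S (L d)))) /\
      AngSub S g /\ AngSub S d
  | GSeq l g d =>
      valid (FImp (S (LNode l)) (S (L g))) /\
      AngSub (upd_end S (S (L d))) g /\ AngSub S d
  | GLoop l g =>
      valid (FImp (S (LNode l)) (FDia (projA S a) (S LEnd))) /\
      AngSub (upd_end S (S (LNode l))) g
  | GDLoop l g =>
      valid (FImp (S (LNode l)) (FAnd (S (L g)) (S LEnd))) /\
      AngSub (upd_end S (S (LNode l))) g
  | _ =>
      valid (FImp (S (L a)) (FDia a (S LEnd)))
  end.

Fixpoint DemSub (S : smap) (a : game) : Prop :=
  match a with
  | GChoice l g d =>
      valid (FImp (S (LNode l)) (FAnd (S (L g)) (S (L d)))) /\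
      DemSub S g /\ DemSub S d
  | GDChoice l g d =>
      valid (FImp (S (LNode l)) (FOr (S (L g)) (S (L d)))) /\
      DemSub S g /\ DemSub S d
  | GSeq l g d =>
      valid (FImp (S (LNode l)) (S (L g))) /\
      DemSub (upd_end S (S (L d))) g /\ DemSub S d
  | GLoop l g =>
      valid (FImp (S (LNode l)) (FAnd (S LEnd) (S (L g)))) /\
      DemSub (upd_end S (S (LNode l))) g
  | GDLoop l g =>
      valid (FImp (S (LNode l)) (FBox (projD S a) (S LEnd))) /\
      DemSub (upd_end S (S (LNode l))) g
  | _ =>
      valid (FImp (S (L a)) (FBox a (S LEnd)))
  end.

(* values at labels outside nodes(a) ∪ {end} are irrelevant; we put phi there *)
Definition MPang (a : game) (phi : fml) : smap :=
  fun b => match b with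
           | LEnd => phi
           | LNode n => if in_nodes n a then FDia (suffix n a) phi else phi
           end.

Definition MPdem (a : game) (phi : fml) : smap :=
  fun b => match b with
           | LEnd => phi
           | LNode n => if in_nodes n a then FBox (suffix n a) phi else phi
           end.

(* Main.v *)
Require Import Defs.
From Stdlib Require Import Reals QArith List Arith.
From Stdlib Require Import Classical.

Fixpoint gmono (a : game) : forall (X Y : state -> Prop),
  (forall t, X t -> Y t) -> forall s, gsem a X s -> gsem a Y s.
Proof.
  destruct a; simpl; intros X Y HXY s H.
  - apply HXY; exact H.
  - eapply (gmono a1); [|exact H]. intros t; apply (gmono a2); exact HXY.
  - destruct H; split; auto.
  - destruct H as [r [y [H1 H2]]]; exists r, y; auto.
  - intros Z HZ. apply H. intros t [Ht|Ht]; apply HZ; [left; auto|right; auto].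
  - destruct H; [left|right]; eapply gmono; eauto.
  - destruct H as [v Hv]; exists v; auto.
  - intros HQ; auto.
  - intros r y Hs; auto.
  - destruct H as [Z [HZ Zs]]. exists Z; split; auto.
    intros t Zt; destruct (HZ t Zt); auto.
  - destruct H; split; eapply gmono; eauto.
  - intros v; auto.
Qed.

Lemma lfp_intro l g X t :
  X t \/ gsem g (gsem (GLoop l g) X) t -> gsem (GLoop l g) X t.
Proof.
  intros H Z HZ. apply HZ. destruct H as [H|H]; [left; auto|right].
  eapply gmono; [|exact H]. intros u Hu. apply Hu. exact HZ.
Qed.

Lemma gfp_elim l g X t :
  gsem (GDLoop l g) X t -> X t /\ gsem g (gsem (GDLoop l g) X) t.
Proof.
  intros [Z [HZ Zt]]. destruct (HZ t Zt) as [H1 H2]. split; auto.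
  eapply gmono; [|exact H2]. intros u Zu. exists Z; auto.
Qed.

Lemma gfp_intro l g X t :
  X t /\ gsem g (gsem (GDLoop l g) X) t -> gsem (GDLoop l g) X t.
Proof.
  intros H. exists (fun u => X u /\ gsem g (gsem (GDLoop l g) X) u). split; auto.
  intros u [H1 H2]. split; auto. eapply gmono; [|exact H2].
  intros v Hv. apply gfp_elim; auto.
Qed.

Lemma lbl_in a : In (lbl a) (nodes a).
Proof. destruct a; simpl; auto. Qed.

Lemma suffix_self' a n : n = lbl a -> suffix n a = a.
Proof. intros ->. destruct a; simpl; rewrite Nat.eqb_refl; reflexivity. Qed.

Lemma in_nodes_true n g : In n (nodes g) -> in_nodes n g = true.
Proof. intros H. unfold in_nodes. apply existsb_exists. exists n; split; auto. apply Nat.eqb_refl. Qed.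

Lemma in_nodes_false n g : ~ In n (nodes g) -> in_nodes n g = false.
Proof.
  intros H. destruct (in_nodes n g) eqn:E; auto. exfalso.
  unfold in_nodes in E. apply existsb_exists in E. destruct E as [x [Hx Hq]].
  apply Nat.eqb_eq in Hq; subst; auto.
Qed.

Lemma neq_lab n l g : In n (nodes g) -> ~ In l (nodes g) -> Nat.eqb n l = false.
Proof. intros H1 H2. apply Nat.eqb_neq. intros ->. auto. Qed.

Lemma nodup_disj (l1 l2 : list label) x : NoDup (l1 ++ l2) -> In x l1 -> ~ In x l2.
Proof.
  induction l1; simpl; intros ND Hx; [contradiction|].
  inversion ND as [|? ? Hni Hnd]; subst. destruct Hx as [->|Hx]; auto.
  intros H; apply Hni; apply in_or_app; auto.
Qed.

Lemma wl_bin l g d : NoDup (l :: nodes g ++ nodes d) ->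
  NoDup (nodes g) /\ NoDup (nodes d) /\ ~ In l (nodes g) /\ ~ In l (nodes d) /\
  (forall n, In n (nodes g) -> ~ In n (nodes d)) /\
  (forall n, In n (nodes d) -> ~ In n (nodes g)).
Proof.
  intros ND. inversion ND as [|? ? H1 H2]; subst.
  repeat split.
  - eapply NoDup_app_remove_r; eauto.
  - eapply NoDup_app_remove_l; eauto.
  - intros H; apply H1; apply in_or_app; auto.
  - intros H; apply H1; apply in_or_app; auto.
  - intros n Hn; eapply nodup_disj; eauto.
  - intros n Hn Hg; eapply nodup_disj; eauto.
Qed.

Lemma wl_un l g : NoDup (l :: nodes g) -> NoDup (nodes g) /\ ~ In l (nodes g).
Proof. intros ND; inversion ND; subst; auto. Qed.

Definition InvA (S : smap) (g : game) (K : state -> Prop) : Prop :=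
  (forall s, fsem (S LEnd) s <-> K s) /\
  (forall n, In n (nodes g) -> forall s, fsem (S (LNode n)) s <-> gsem (suffix n g) K s).

Lemma InvA_top S g K : InvA S g K -> forall s, fsem (S (L g)) s <-> gsem g K s.
Proof.
  intros [_ HN] s. pose proof (HN _ (lbl_in g) s) as H.
  rewrite (suffix_self' g (lbl g) eq_refl) in H. exact H.
Qed.

Lemma InvA_ext S1 S2 g K : (forall b s, fsem (S1 b) s <-> fsem (S2 b) s) ->
  InvA S1 g K -> InvA S2 g K.
Proof.
  intros E [HE HN]. split.
  - intros s. rewrite <- E. apply HE.
  - intros n Hn s. rewrite <- E. apply HN; auto.
Qed.

Lemma InvA_seq l g d S K : NoDup (nodes (GSeq l g d)) -> InvA S (GSeq l g d) K ->
  InvA (upd_end S (S (L d))) g (gsem d K) /\ InvA S d K /\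
  (forall s, fsem (S (LNode l)) s <-> gsem g (gsem d K) s).
Proof.
  intros ND [HE HN]. simpl in ND.
  destruct (wl_bin _ _ _ ND) as (ND1 & ND2 & nl1 & nl2 & dj1 & dj2).
  assert (Hd : InvA S d K).
  { split; auto. intros n Hn s. pose proof (HN n) as H.
    simpl in H. rewrite (neq_lab _ _ _ Hn nl2), (in_nodes_false _ _ (dj2 _ Hn)) in H.
    apply H. right; apply in_or_app; auto. }
  split; [|split; [exact Hd|]].
  - split.
    + intros s. exact (InvA_top _ _ _ Hd s).
    + intros n Hn s. pose proof (HN n) as H.
      simpl in H. rewrite (neq_lab _ _ _ Hn nl1), (in_nodes_true _ _ Hn) in H.
      apply H. right; apply in_or_app; auto.
  - intros s. pose proof (HN l (or_introl eq_refl) s) as H.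
    rewrite (suffix_self' (GSeq l g d) l eq_refl) in H. exact H.
Qed.

Lemma InvA_choice l g d S K : NoDup (nodes (GChoice l g d)) -> InvA S (GChoice l g d) K ->
  InvA S g K /\ InvA S d K /\
  (forall s, fsem (S (LNode l)) s <-> gsem g K s \/ gsem d K s).
Proof.
  intros ND [HE HN]. simpl in ND.
  destruct (wl_bin _ _ _ ND) as (ND1 & ND2 & nl1 & nl2 & dj1 & dj2).
  split; [|split].
  - split; auto. intros n Hn s. pose proof (HN n) as H.
    simpl in H. rewrite (neq_lab _ _ _ Hn nl1), (in_nodes_true _ _ Hn) in H.
    apply H. right; apply in_or_app; auto.
  - split; auto. intros n Hn s. pose proof (HN n) as H.
    simpl in H. rewrite (neq_lab _ _ _ Hn nl2), (in_nodes_false _ _ (dj2 _ Hn)) in H.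
    apply H. right; apply in_or_app; auto.
  - intros s. pose proof (HN l (or_introl eq_refl) s) as H.
    rewrite (suffix_self' (GChoice l g d) l eq_refl) in H. exact H.
Qed.

Lemma InvA_dchoice l g d S K : NoDup (nodes (GDChoice l g d)) -> InvA S (GDChoice l g d) K ->
  InvA S g K /\ InvA S d K /\
  (forall s, fsem (S (LNode l)) s <-> gsem g K s /\ gsem d K s).
Proof.
  intros ND [HE HN]. simpl in ND.
  destruct (wl_bin _ _ _ ND) as (ND1 & ND2 & nl1 & nl2 & dj1 & dj2).
  split; [|split].
  - split; auto. intros n Hn s. pose proof (HN n) as H.
    simpl in H. rewrite (neq_lab _ _ _ Hn nl1), (in_nodes_true _ _ Hn) in H.
    apply H. right; apply in_or_app; auto.
  - split; auto. intros n Hn s. pose proof (HN n) as H.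
    simpl in H. rewrite (neq_lab _ _ _ Hn nl2), (in_nodes_false _ _ (dj2 _ Hn)) in H.
    apply H. right; apply in_or_app; auto.
  - intros s. pose proof (HN l (or_introl eq_refl) s) as H.
    rewrite (suffix_self' (GDChoice l g d) l eq_refl) in H. exact H.
Qed.

Lemma InvA_loop l g S K : NoDup (nodes (GLoop l g)) -> InvA S (GLoop l g) K ->
  InvA (upd_end S (S (LNode l))) g (gsem (GLoop l g) K) /\
  (forall s, fsem (S (LNode l)) s <-> gsem (GLoop l g) K s).
Proof.
  intros ND [HE HN]. simpl in ND. destruct (wl_un _ _ ND) as [ND1 nl].
  assert (Hl : forall s, fsem (S (LNode l)) s <-> gsem (GLoop l g) K s).
  { intros s. pose proof (HN l (or_introl eq_refl) s) as H.
    rewrite (suffix_self' (GLoop l g) l eq_refl) in H. exact H. }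
  split; auto. split.
  - exact Hl.
  - intros n Hn s. pose proof (HN n) as H.
    simpl in H. rewrite (neq_lab _ _ _ Hn nl) in H.
    apply H. right; auto.
Qed.

Lemma InvA_dloop l g S K : NoDup (nodes (GDLoop l g)) -> InvA S (GDLoop l g) K ->
  InvA (upd_end S (S (LNode l))) g (gsem (GDLoop l g) K) /\
  (forall s, fsem (S (LNode l)) s <-> gsem (GDLoop l g) K s).
Proof.
  intros ND [HE HN]. simpl in ND. destruct (wl_un _ _ ND) as [ND1 nl].
  assert (Hl : forall s, fsem (S (LNode l)) s <-> gsem (GDLoop l g) K s).
  { intros s. pose proof (HN l (or_introl eq_refl) s) as H.
    rewrite (suffix_self' (GDLoop l g) l eq_refl) in H. exact H. }
  split; auto. split.
  - exact Hl.
  - intros n Hn s. pose proof (HN n) as H.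
    simpl in H. rewrite (neq_lab _ _ _ Hn nl) in H.
    apply H. right; auto.
Qed.

Lemma atomicA S a K : InvA S a K -> valid (FImp (S (L a)) (FDia a (S LEnd))).
Proof.
  intros I s Hs. simpl. apply (InvA_top _ _ _ I) in Hs.
  eapply gmono; [|exact Hs]. intros t; apply (proj1 I).
Qed.

Lemma projA_ok : forall g S K X s, NoDup (nodes g) -> InvA S g K ->
  gsem g (fun u => K u /\ X u) s -> gsem (projA S g) X s.
Proof.
  induction g; intros S K X s ND I H;
    try (simpl projA; eapply gmono; [|exact H]; intros t [_ Ht]; exact Ht).
  -
    destruct (InvA_seq _ _ _ _ _ ND I) as (I1 & I2 & _).
    simpl in ND. destruct (wl_bin _ _ _ ND) as (ND1 & ND2 & _).
    simpl. apply (IHg1 _ (gsem g2 K)); auto.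
    eapply gmono; [|exact H]. intros t Ht. split.
    + eapply gmono; [|exact Ht]. intros u [Hu _]; exact Hu.
    + apply (IHg2 _ K); auto.
  -
    destruct H as [r [y [Hsol [H1 H2]]]]. simpl. exists r, y.
    split; [exact Hsol|]. split; [apply (proj1 I); exact H1|exact H2].
  -
    destruct (InvA_loop _ _ _ _ ND I) as (I1 & _).
    simpl in ND. destruct (wl_un _ _ ND) as (ND1 & _).
    set (NL := GLoop l (GSeq new_lab (GTest new_lab (S (L g)))
                 (projA (upd_end S (S (LNode l))) g))).
    set (Y := gsem (GTest new_lab (S LEnd)) X).
    change (gsem NL Y s).
    assert (Hm : gsem (GLoop l g) K s /\ gsem NL Y s); [|tauto].
    apply (H (fun t => gsem (GLoop l g) K t /\ gsem NL Y t)).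
    intros t [[Kt Xt]|Ht].
    + split. apply lfp_intro; left; auto.
      apply lfp_intro; left. split; auto. apply (proj1 I); auto.
    + split.
      * apply lfp_intro; right. eapply gmono; [|exact Ht]. intros u [Hu _]; exact Hu.
      * apply lfp_intro; right. split.
        -- apply (proj2 (InvA_top _ _ _ I1 t)).
           eapply gmono; [|exact Ht]. intros u [Hu _]; exact Hu.
        -- apply (IHg _ _ _ _ ND1 I1). exact Ht.
  -
    destruct (InvA_choice _ _ _ _ _ ND I) as (I1 & I2 & _).
    simpl in ND. destruct (wl_bin _ _ _ ND) as (ND1 & ND2 & _).
    simpl. destruct H as [H|H]; [left|right]; split.
    + apply (proj2 (InvA_top _ _ _ I1 s)). eapply gmono; [|exact H]. intros u [Hu _]; exact Hu.
    + eapply IHg1; eauto.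
    + apply (proj2 (InvA_top _ _ _ I2 s)). eapply gmono; [|exact H]. intros u [Hu _]; exact Hu.
    + eapply IHg2; eauto.
  -
    destruct H as [v [H1 H2]]. simpl. exists v. split; [apply (proj1 I); exact H1|exact H2].
  -
    destruct (InvA_dloop _ _ _ _ ND I) as (I1 & _).
    simpl in ND. destruct (wl_un _ _ ND) as (ND1 & _).
    simpl projA.
    exists (gsem (GDLoop l g) (fun u => K u /\ X u)). split; [|exact H].
    intros t Zt. destruct (gfp_elim _ _ _ _ Zt) as [[_ Xt] Gt]. split; auto.
    apply (IHg _ _ _ _ ND1 I1). eapply gmono; [|exact Gt].
    intros u Zu. split; auto. eapply gmono; [|exact Zu]. intros v [Hv _]; exact Hv.
  -
    destruct (InvA_dchoice _ _ _ _ _ ND I) as (I1 & I2 & _).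
    simpl in ND. destruct (wl_bin _ _ _ ND) as (ND1 & ND2 & _).
    destruct H as [H1 H2]. simpl. split; eauto.
Qed.

Lemma angsub_gen : forall g S K, NoDup (nodes g) -> InvA S g K -> AngSub S g.
Proof.
  induction g; intros S K ND I; try exact (atomicA _ _ _ I).
  - destruct (InvA_seq _ _ _ _ _ ND I) as (I1 & I2 & Hl).
    simpl in ND. destruct (wl_bin _ _ _ ND) as (ND1 & ND2 & _).
    simpl. split; [|split; eauto].
    intros s Hs. apply Hl in Hs. exact (proj2 (InvA_top _ _ _ I1 s) Hs).
  - destruct (InvA_loop _ _ _ _ ND I) as (I1 & Hl).
    pose proof ND as ND0.
    simpl in ND. destruct (wl_un _ _ ND) as (ND1 & _).
    simpl AngSub. split; [|eauto].
    intros s Hs. apply Hl in Hs. simpl.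
    apply (projA_ok _ _ K _ _ ND0 I).
    eapply gmono; [|exact Hs]. intros t Ht; split; auto. apply (proj1 I); auto.
  - destruct (InvA_choice _ _ _ _ _ ND I) as (I1 & I2 & Hl).
    simpl in ND. destruct (wl_bin _ _ _ ND) as (ND1 & ND2 & _).
    simpl. split; [|split; eauto].
    intros s Hs. apply Hl in Hs. destruct Hs as [Hs|Hs]; [left|right].
    exact (proj2 (InvA_top _ _ _ I1 s) Hs). exact (proj2 (InvA_top _ _ _ I2 s) Hs).
  - destruct (InvA_dloop _ _ _ _ ND I) as (I1 & Hl).
    simpl in ND. destruct (wl_un _ _ ND) as (ND1 & _).
    simpl AngSub. split; [|eauto].
    intros s Hs. apply Hl in Hs. destruct (gfp_elim _ _ _ _ Hs) as [Ks Gs].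
    split.
    + exact (proj2 (InvA_top _ _ _ I1 s) Gs).
    + apply (proj1 I); auto.
  - destruct (InvA_dchoice _ _ _ _ _ ND I) as (I1 & I2 & Hl).
    simpl in ND. destruct (wl_bin _ _ _ ND) as (ND1 & ND2 & _).
    simpl. split; [|split; eauto].
    intros s Hs. apply Hl in Hs. destruct Hs as [H1 H2]; split.
    exact (proj2 (InvA_top _ _ _ I1 s) H1). exact (proj2 (InvA_top _ _ _ I2 s) H2).
Qed.

Definition negS (S : smap) : smap := fun b => FNot (S b).

Lemma negS_upd S Q b s : fsem (upd_end (negS S) (FNot Q) b) s <-> fsem (negS (upd_end S Q) b) s.
Proof. destruct b; simpl; tauto. Qed.


Lemma projD_ok : forall g S C Y s, NoDup (nodes g) -> InvA (negS S) g C ->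
  gsem (projD S g) Y s -> gsem g (fun u => C u \/ Y u) s.
Proof.
  induction g; intros S C Y s ND I H;
    try (simpl projD in H; eapply gmono; [|exact H]; intros t Ht; right; exact Ht).
  -
    destruct (InvA_seq _ _ _ _ _ ND I) as (I1 & I2 & _).
    simpl in ND. destruct (wl_bin _ _ _ ND) as (ND1 & ND2 & _).
    apply InvA_ext with (S2 := negS (upd_end S (S (L g2)))) in I1;
      [|intros b t; apply negS_upd].
    simpl in H. simpl. eapply gmono; [|exact (IHg1 _ _ _ _ ND1 I1 H)].
    intros t [Ht|Ht].
    + eapply gmono; [|exact Ht]. intros u Hu; left; exact Hu.
    + exact (IHg2 _ _ _ _ ND2 I2 Ht).
  -
    destruct (InvA_loop _ _ _ _ ND I) as (I1 & _).
    simpl in ND. destruct (wl_un _ _ ND) as (ND1 & _).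
    apply InvA_ext with (S2 := negS (upd_end S (S (LNode l)))) in I1;
      [|intros b t; apply negS_upd].
    simpl in H. apply H. intros t [Ht|Ht].
    + apply lfp_intro; left; right; exact Ht.
    + apply lfp_intro; right. eapply gmono; [|exact (IHg _ _ _ _ ND1 I1 Ht)].
      intros u [Hu|Hu]; auto.
      eapply gmono; [|exact Hu]. intros v Hv; left; exact Hv.
  -
    destruct (InvA_choice _ _ _ _ _ ND I) as (I1 & I2 & _).
    simpl in ND. destruct (wl_bin _ _ _ ND) as (ND1 & ND2 & _).
    simpl in H. destruct H as [H|H]; [left|right]; eauto.
  -
    simpl in H. simpl. intros r y Hsol.
    destruct (classic (C (y r))) as [Hc|Hc]; [left; exact Hc|right].
    apply (H r y Hsol). apply NNPP. intros N. apply Hc. apply (proj1 I). exact N.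
  -
    destruct (InvA_dloop _ _ _ _ ND I) as (I1 & Hl).
    simpl in ND. destruct (wl_un _ _ ND) as (ND1 & _).
    set (G := gsem (GDLoop l g) C).
    assert (I2 : InvA (negS (upd_end S (FOr (S (L g)) (S LEnd)))) g G).
    { apply InvA_ext with (S1 := upd_end (negS S) (negS S (LNode l))); [|exact I1].
      intros [n|] t; [simpl; tauto|].
      change (~ fsem (S (LNode l)) t <-> ~ (fsem (S (L g)) t \/ fsem (S LEnd) t)).
      rewrite (Hl t). pose proof (InvA_top _ _ _ I1 t) as Ht. pose proof (proj1 I t) as He.
      change (~ fsem (S (L g)) t <-> gsem g G t) in Ht.
      change (~ fsem (S LEnd) t <-> C t) in He.
      split.
      - intros HG [Ha|Ha].
        + exact (proj2 Ht (proj2 (gfp_elim _ _ _ _ HG)) Ha).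
        + exact (proj2 He (proj1 (gfp_elim _ _ _ _ HG)) Ha).
      - intros N. apply gfp_intro. split.
        + apply He. intros Ha; apply N; right; exact Ha.
        + apply Ht. intros Ha; apply N; left; exact Ha. }
    simpl in H. destruct H as [Z [HZ Zs]].
    exists (fun t => Z t \/ G t). split; [|left; exact Zs].
    intros t [Zt|Gt].
    + destruct (HZ t Zt) as [H1 H2]. split.
      * destruct (classic (fsem (S LEnd) t)) as [E|E]; [right; auto|left].
        apply (proj1 I). exact E.
      * destruct (classic (fsem (S (L g)) t)) as [E|E].
        -- eapply gmono; [|exact (IHg _ _ _ _ ND1 I2 (H2 E))].
           intros u [Hu|Hu]; [right|left]; exact Hu.
        -- pose proof (proj1 (InvA_top _ _ _ I1 t) E) as Gg.
           eapply gmono; [|exact Gg]. intros u Hu; right; exact Hu.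
    + destruct (gfp_elim l g C t Gt) as [Ct Gg]. split; [left; exact Ct|].
      eapply gmono; [|exact Gg]. intros u Hu; right; exact Hu.
  -
    destruct (InvA_dchoice _ _ _ _ _ ND I) as (I1 & I2 & _).
    simpl in ND. destruct (wl_bin _ _ _ ND) as (ND1 & ND2 & _).
    simpl in H. destruct H as [H1 H2]. simpl. split.
    + destruct (classic (fsem (S (L g1)) s)) as [E|E]; [eauto|].
      pose proof (proj1 (InvA_top _ _ _ I1 s) E) as Gg.
      eapply gmono; [|exact Gg]. intros u Hu; left; exact Hu.
    + destruct (classic (fsem (S (L g2)) s)) as [E|E]; [eauto|].
      pose proof (proj1 (InvA_top _ _ _ I2 s) E) as Gg.
      eapply gmono; [|exact Gg]. intros u Hu; left; exact Hu.
  -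
    simpl in H. simpl. intros v.
    destruct (classic (C (upd s x v))) as [Hc|Hc]; [left; exact Hc|right].
    apply H. apply NNPP. intros N. apply Hc. apply (proj1 I). exact N.
Qed.

Lemma topD S g C : InvA (negS S) g C -> forall s, ~ fsem (S (L g)) s <-> gsem g C s.
Proof. intros I s. exact (InvA_top _ _ _ I s). Qed.

Lemma atomicD S a C : InvA (negS S) a C -> valid (FImp (S (L a)) (FBox a (S LEnd))).
Proof.
  intros I s Hs Hg. apply (proj2 (topD _ _ _ I s)); [|exact Hs].
  eapply gmono; [|exact Hg]. intros t Ht. apply (proj1 I). exact Ht.
Qed.

Lemma demsub_gen : forall g S C, NoDup (nodes g) -> InvA (negS S) g C -> DemSub S g.
Proof.
  induction g; intros S C ND I; try exact (atomicD _ _ _ I).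
  - destruct (InvA_seq _ _ _ _ _ ND I) as (I1 & I2 & Hl).
    simpl in ND. destruct (wl_bin _ _ _ ND) as (ND1 & ND2 & _).
    apply InvA_ext with (S2 := negS (upd_end S (S (L g2)))) in I1;
      [|intros b t; apply negS_upd].
    simpl. split; [|split; eauto].
    intros s Hs. apply NNPP. intros N.
    apply (proj1 (topD _ _ _ I1 s)) in N. apply (proj2 (Hl s)) in N. exact (N Hs).
  - destruct (InvA_loop _ _ _ _ ND I) as (I1 & Hl).
    simpl in ND. destruct (wl_un _ _ ND) as (ND1 & _).
    apply InvA_ext with (S2 := negS (upd_end S (S (LNode l)))) in I1;
      [|intros b t; apply negS_upd].
    simpl DemSub. split; [|eauto].
    intros s Hs. simpl. split.
    + apply NNPP. intros N. apply (proj1 (proj1 I s)) in N.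
      apply (proj2 (Hl s)); [|exact Hs]. apply lfp_intro; left; exact N.
    + apply NNPP. intros N. apply (proj1 (topD _ _ _ I1 s)) in N.
      apply (proj2 (Hl s)); [|exact Hs]. apply lfp_intro; right; exact N.
  - destruct (InvA_choice _ _ _ _ _ ND I) as (I1 & I2 & Hl).
    simpl in ND. destruct (wl_bin _ _ _ ND) as (ND1 & ND2 & _).
    simpl. split; [|split; eauto].
    intros s Hs. split; apply NNPP; intros N.
    + apply (proj1 (topD _ _ _ I1 s)) in N. apply (proj2 (Hl s)); [left; exact N|exact Hs].
    + apply (proj1 (topD _ _ _ I2 s)) in N. apply (proj2 (Hl s)); [right; exact N|exact Hs].
  - destruct (InvA_dloop _ _ _ _ ND I) as (I1 & Hl).
    pose proof ND as ND0.
    simpl in ND. destruct (wl_un _ _ ND) as (ND1 & _).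
    apply InvA_ext with (S2 := negS (upd_end S (S (LNode l)))) in I1;
      [|intros b t; apply negS_upd].
    simpl DemSub. split; [|eauto].
    intros s Hs Hg. pose proof (projD_ok _ _ _ _ _ ND0 I Hg) as H.
    apply (proj2 (Hl s)); [|exact Hs].
    eapply gmono; [|exact H]. intros t [Ht|Ht]; auto. apply (proj1 I); exact Ht.
  - destruct (InvA_dchoice _ _ _ _ _ ND I) as (I1 & I2 & Hl).
    simpl in ND. destruct (wl_bin _ _ _ ND) as (ND1 & ND2 & _).
    simpl. split; [|split; eauto].
    intros s Hs. apply NNPP. intros N. apply (proj2 (Hl s)); [|exact Hs].
    split; apply NNPP; intros M.
    + apply M, (proj1 (topD _ _ _ I1 s)). intros E; apply N; left; exact E.
    + apply M, (proj1 (topD _ _ _ I2 s)). intros E; apply N; right; exact E.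
Qed.

Theorem mainTheorem7 (a : game) (phi : fml) :
  well_labeled a ->
  (AngSub (MPang a phi) a /\ valid (FImp (MPang a phi LEnd) phi)) /\
  DemSub (MPdem a phi) a.
Proof.
  intros WL. unfold well_labeled in WL. split; [split|].
  - apply (angsub_gen a _ (fsem phi) WL). split.
    + intros s; simpl; tauto.
    + intros n Hn s. simpl. rewrite (in_nodes_true _ _ Hn). simpl. tauto.
  - intros s H; exact H.
  - apply (demsub_gen a _ (fun s => ~ fsem phi s) WL). split.
    + intros s; simpl; tauto.
    + intros n Hn s. unfold negS. simpl. rewrite (in_nodes_true _ _ Hn). simpl.
      split; [apply NNPP|tauto].
Qed.
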